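(* Let $m\in\mathbb{Z}_{\ge0}$. In $\mathbb{R}^{2m+6}$ with standard basis $e_0,\ldots,e_{2m+5}$, let $\rho=\frac12\sum_re_r$, $v_S=\sum_{r\in S}e_r$ for $S\subset\{0,\ldots,2m+5\}$ with $|S|=m+1$, and $w_{ij}=\rho-e_i-e_j$. Let $P^{(m)}$ be the convex hull of all $v_S$ and all $w_{ij}$ ($0\le i<j\le 2m+5$); $P_{\rm I}$ the convex hull of all $v_S$; $P_{\rm II}$ the convex hull of the $v_S$ with $S\subset\{1,\ldots,2m+5\}$ and the $w_{0j}$ ($1\le j\le 2m+5$); $P_{\rm III}$ the convex hull of the $v_S$ with $S\subset\{3,\ldots,2m+5\}$ and the $w_{ij}$ ($0\le i<j\le2$). For $\sigma\in S_{2m+6}$ acting by permuting coordinates, write $\sigma(A)=\{\sigma(a):a\in A\}$. Then \[P^{(m)}=P_{\rm I}\cup\bigcup_{\sigma\in S_{2m+6}}\sigma(P_{\rm II})\cup\bigcup_{\sigma\in S_{2m+6}}\sigma(P_{\rm III}).\] *)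

(* Defs.v *)
From HB Require Import structures.
From mathcomp Require Import all_boot all_order all_algebra all_fingroup.
Set Implicit Arguments. Unset Strict Implicit. Unset Printing Implicit Defensive.
Import Order.TTheory GRing.Theory Num.Theory.
Local Open Scope ring_scope.

Definition conv_hull (R : realFieldType) (N : nat) (A : 'rV[R]_N -> Prop)
  : 'rV[R]_N -> Prop :=
  fun x => exists (k : nat) (p : 'I_k -> 'rV[R]_N) (l : 'I_k -> R),
    (forall i, A (p i)) /\ (forall i, 0 <= l i) /\
    \sum_i l i = 1 /\ x = \sum_i l i *: p i.

Definition evec (R : realFieldType) (N : nat) (r : 'I_N) : 'rV[R]_N :=
  delta_mx 0 r.

Definition rho (R : realFieldType) (N : nat) : 'rV[R]_N :=
  2^-1 *: \sum_(r < N) evec R r.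

Definition vS (R : realFieldType) (N : nat) (S : {set 'I_N}) : 'rV[R]_N :=
  \sum_(r in S) evec R r.

Definition wij (R : realFieldType) (N : nat) (i j : 'I_N) : 'rV[R]_N :=
  rho R N - evec R i - evec R j.

(* permutation sigma acting on coordinates: sigma(e_r) = e_{sigma r} *)
Definition permv (R : realFieldType) (N : nat) (s : 'S_N) (x : 'rV[R]_N)
  : 'rV[R]_N := \row_j x 0 ((s^-1)%g j).

Definition perm_img (R : realFieldType) (N : nat) (s : 'S_N)
  (A : 'rV[R]_N -> Prop) : 'rV[R]_N -> Prop :=
  fun x => exists2 y, A y & x = permv s y.

Section Gens.
Variables (R : realFieldType) (m : nat).
Local Notation N := (2 * m + 6)%N.

Definition gen_P : 'rV[R]_N -> Prop := fun x =>
  (exists S : {set 'I_N}, #|S| = m.+1 /\ x = vS R S) \/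
  (exists i j : 'I_N, (i < j)%N /\ x = wij R i j).

Definition gen_I : 'rV[R]_N -> Prop := fun x =>
  exists S : {set 'I_N}, #|S| = m.+1 /\ x = vS R S.

Definition gen_II : 'rV[R]_N -> Prop := fun x =>
  (exists S : {set 'I_N}, #|S| = m.+1 /\ (forall r, r \in S -> 1 <= r)%N /\
     x = vS R S) \/
  (exists i j : 'I_N, nat_of_ord i = 0%N /\ (1 <= j)%N /\ x = wij R i j).

Definition gen_III : 'rV[R]_N -> Prop := fun x =>
  (exists S : {set 'I_N}, #|S| = m.+1 /\ (forall r, r \in S -> 3 <= r)%N /\
     x = vS R S) \/
  (exists i j : 'I_N, (i < j)%N /\ (j <= 2)%N /\ x = wij R i j).

Definition P_m := conv_hull gen_P.
Definition P_I := conv_hull gen_I.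
Definition P_II := conv_hull gen_II.
Definition P_III := conv_hull gen_III.
End Gens.

(* Main.v *)
Require Import Defs.
From HB Require Import structures.
From mathcomp Require Import all_boot all_order all_algebra all_fingroup.
From mathcomp Require Import ring lra zify.
Set Implicit Arguments. Unset Strict Implicit. Unset Printing Implicit Defensive.
Import Order.TTheory GRing.Theory Num.Theory.
Local Open Scope ring_scope.


Section Ncomb.
Variable R : realFieldType.
Variable n : nat.
Implicit Types (A B : 'rV[R]_n -> Prop) (y z : 'rV[R]_n).

Definition ncomb A (s : R) y := exists (k : nat) (p : 'I_k -> 'rV[R]_n) (l : 'I_k -> R),
    (forall i, A (p i)) /\ (forall i, 0 <= l i) /\
    \sum_i l i = s /\ y = \sum_i l i *: p i.

Lemma ncomb0 A : ncomb A 0 0.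
Proof.
exists 0%N, (fun _ => 0), (fun _ => 0); split; first by case.
by split; [case | rewrite !big_ord0].
Qed.

Lemma ncomb1 A c p : A p -> 0 <= c -> ncomb A c (c *: p).
Proof.
move=> Ap c0; exists 1%N, (fun _ => p), (fun _ => c).
by rewrite !big_ord1.
Qed.

Lemma ncombD A s s' y z : ncomb A s y -> ncomb A s' z -> ncomb A (s + s') (y + z).
Proof.
move=> [k1 [p1 [l1 [Ap1 [l10 [s1 ->]]]]]] [k2 [p2 [l2 [Ap2 [l20 [s2 ->]]]]]].
pose p i := match @split k1 k2 i with inl a => p1 a | inr b => p2 b end.
pose l i := match @split k1 k2 i with inl a => l1 a | inr b => l2 b end.
have sL i : split (lshift k2 i) = inl i := unsplitK (inl i).
have sR i : split (rshift k1 i) = inr i := unsplitK (inr i).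
exists (k1 + k2)%N, p, l; split; first by move=> i; rewrite /p; case: split.
split; first by move=> i; rewrite /l; case: split.
rewrite !big_split_ord /p /l.
split.
  by rewrite -s1 -s2; congr (_ + _); apply: eq_bigr => i _; rewrite ?sL ?sR.
by congr (_ + _); apply: eq_bigr => i _; rewrite ?sL ?sR.
Qed.

Lemma ncombZ A c s y : 0 <= c -> ncomb A s y -> ncomb A (c * s) (c *: y).
Proof.
move=> c0 [k [p [l [Ap [l0 [<- ->]]]]]].
exists k, p, (fun i => c * l i); split => //; split; first by move=> i; rewrite mulr_ge0.
rewrite mulr_sumr scaler_sumr; split => //.
by apply: eq_bigr => i _; rewrite scalerA.
Qed.

Lemma ncomb_mono A B s y : (forall p, A p -> B p) -> ncomb A s y -> ncomb B s y.
Proof.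
move=> AB [k [p [l [Ap H]]]]; exists k, p, l; split => // i; exact: AB.
Qed.

Lemma ncomb_sum A (I : finType) (P : pred I) (l : I -> R) (p : I -> 'rV[R]_n) :
  (forall i, P i -> A (p i)) -> (forall i, P i -> 0 <= l i) ->
  ncomb A (\sum_(i | P i) l i) (\sum_(i | P i) l i *: p i).
Proof.
move=> Ap l0; apply: (big_rec2 (fun s y => ncomb A s y)); first exact: ncomb0.
by move=> i s y Pi H; apply: ncombD => //; apply: ncomb1; [apply: Ap | apply: l0].
Qed.

Lemma ncomb_conv A x : ncomb A 1 x <-> conv_hull A x.
Proof. by []. Qed.

Lemma conv_ge A (phi : 'rV[R]_n -> R) (b : R) x :
  (forall a y z, phi (a *: y + z) = a * phi y + phi z) ->
  conv_hull A x -> (forall p, A p -> b <= phi p) -> b <= phi x.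
Proof.
move=> lin [k [p [l [Ap [l0 [s1 ->]]]]]] Hb.
have phi0 : phi 0 = 0.
  have := lin 1 0 0; rewrite scale1r addr0 mul1r => h.
  by apply/eqP; rewrite -(subrr (phi 0)) {2}h addrK.
have -> : phi (\sum_i l i *: p i) = \sum_i l i * phi (p i).
  apply: (big_rec2 (fun a b => phi a = b)) => // i a c _ <-; by rewrite lin.
rewrite -[b]mul1r -s1 mulr_suml; apply: ler_sum => i _.
by rewrite ler_wpM2l //; apply: Hb.
Qed.

End Ncomb.


Section Entries.
Variable R : realFieldType.
Variable n : nat.

Lemma evecE (r j : 'I_n) : evec R r 0 j = (j == r)%:R.
Proof. by rewrite /evec mxE eqxx. Qed.

Lemma sum_delta (F : 'I_n -> R) q : \sum_r F r * (q == r)%:R = F q.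
Proof.
rewrite (bigD1 q) //= eqxx mulr1 big1 ?addr0 // => r rq.
by rewrite eq_sym (negbTE rq) mulr0.
Qed.

Lemma sum_delta' (F : 'I_n -> R) q : \sum_r F r * (r == q)%:R = F q.
Proof. by rewrite -(sum_delta F q); apply: eq_bigr => r _; rewrite eq_sym. Qed.

Lemma sum_cst (P : pred 'I_n) (a : R) : \sum_(r | P r) a = a * #|P|%:R.
Proof. by rewrite sumr_const mulr_natr. Qed.

Lemma sum_ind (S : {set 'I_n}) : \sum_r ((r \in S)%:R : R) = #|S|%:R.
Proof.
rewrite -sum1_card natr_sum [RHS]big_mkcond /=.
by apply: eq_bigr => r _; case: (r \in S).
Qed.

Lemma vSE (S : {set 'I_n}) j : vS R S 0 j = (j \in S)%:R.
Proof.
rewrite /vS summxE.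
under eq_bigr do rewrite evecE.
rewrite big_mkcond /=.
rewrite (bigD1 j) //= eqxx big1 => [|r rj]; first by case: (j \in S); rewrite ?mulr1 addr0.
by rewrite eq_sym (negbTE rj); case: (r \in S).
Qed.

Lemma rhoE j : rho R n 0 j = 2^-1.
Proof.
rewrite /rho mxE summxE.
under eq_bigr do rewrite evecE.
by rewrite (bigD1 j) //= eqxx big1 ?addr0 ?mulr1 // => r rj; rewrite eq_sym (negbTE rj).
Qed.

Lemma wijE (i j q : 'I_n) : wij R i j 0 q = 2^-1 - (q == i)%:R - (q == j)%:R.
Proof. by rewrite /wij !mxE eqxx /=; have := rhoE q; rewrite /rho mxE => ->. Qed.

End Entries.


Section Hyper.
Variable R : realFieldType.
Variable n : nat.
Variable k : nat.
Variable F : pred 'I_n.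
Variable a : R.

Definition genH (p : 'rV[R]_n) :=
  exists S : {set 'I_n}, #|S| = k /\ (forall r, r \in S -> F r) /\ p = vS R S.

Definition hyp (u : 'rV[R]_n) :=
  [/\ forall r, 0 <= u 0 r <= a, forall r, ~~ F r -> u 0 r = 0 &
      \sum_r u 0 r = k%:R * a].

Definition frac (u : 'rV[R]_n) := [set r | 0 < u 0 r < a].

Lemma move_hyp u i j e : i != j -> hyp u -> 0 < u 0 i -> 0 < u 0 j ->
  u 0 i < a -> u 0 j < a ->
  0 <= e -> e <= a - u 0 i -> e <= u 0 j ->
  let v := u + e *: (evec R i - evec R j) in
  hyp v /\ frac v \subset frac u.
Proof.
move=> ij [Hb HF Hs] ui uj ui' uj' e0 e1 e2 v.
have vE r : v 0 r = u 0 r + e * ((r == i)%:R - (r == j)%:R).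
  by rewrite /v /evec !mxE eqxx.
have vi : v 0 i = u 0 i + e by rewrite vE eqxx (negbTE ij) subr0 mulr1.
have vj : v 0 j = u 0 j - e by rewrite vE eqxx eq_sym (negbTE ij) sub0r mulrN1.
have vo r : r != i -> r != j -> v 0 r = u 0 r.
  by move=> ri rj; rewrite vE (negbTE ri) (negbTE rj) subrr mulr0 addr0.
split; first split.
- move=> r; case: (eqVneq r i) => [->|ri]; first by rewrite vi; have := Hb i; case/andP => *; apply/andP; split; lra.
  case: (eqVneq r j) => [->|rj]; first by rewrite vj; have := Hb j; case/andP => *; apply/andP; split; lra.
  by rewrite vo.
- move=> r Fr; have ur := HF r Fr.
  have ri : r != i by apply/eqP => ri; move: ui; rewrite -ri ur ltxx.
  have rj : r != j by apply/eqP => rj; move: uj; rewrite -rj ur ltxx.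
  by rewrite vo.
- under eq_bigr do rewrite vE.
  rewrite big_split /= -Hs -mulr_sumr sumrB.
  have h q : \sum_(r < n) ((r == q)%:R : R) = 1.
    by rewrite -[RHS](sum_delta' (fun _ => 1) q); apply: eq_bigr => r _; rewrite mul1r.
  by rewrite !h subrr mulr0 addr0.
apply/subsetP => r; rewrite !inE.
case: (eqVneq r i) => [->|ri]; first by rewrite ui ui'.
case: (eqVneq r j) => [->|rj]; first by rewrite uj uj'.
by rewrite vo.
Qed.

Lemma hyper u : 0 <= a -> hyp u -> ncomb genH a u.
Proof.
move=> a0; have [c] := ubnP #|frac u|; elim: c u => // c IH u Hc Hu.
case: (Hu) => Hb HF Hs.
case: (eqVneq a 0) => [az|anz].
  have -> : u = 0.
    apply/rowP => r; rewrite mxE; have := Hb r; rewrite az => /andP[*]; lra.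
  by rewrite az; apply: ncomb0.
have apos : 0 < a by rewrite lt_def anz.
case: (set_0Vmem (frac u)) => [E0|[i Hi]].
  pose S := [set r | u 0 r == a].
  have uE r : u 0 r = a * (r \in S)%:R.
    rewrite inE; case: eqP => [->|ne]; first by rewrite mulr1.
    rewrite mulr0; have : r \notin frac u by rewrite E0 inE.
    rewrite inE; have := Hb r; case/andP => h1 h2.
    have h3 : u 0 r < a by rewrite lt_def h2 andbT eq_sym; apply/eqP.
    rewrite h3 andbT -leNgt => h4; apply/eqP; rewrite eq_le h4 h1.
    done.
  have uv : u = a *: vS R S by apply/rowP => r; rewrite mxE vSE uE.
  have cS : #|S| = k.
    apply/eqP; rewrite -(eqr_nat R); apply/eqP; apply: (mulfI anz).
    rewrite -sum_ind mulr_sumr -[RHS]mulrC -Hs; apply: eq_bigr => r _.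
    by rewrite uE.
  rewrite uv; apply: ncomb1 => //; exists S; split => //; split => // r rS.
  apply/negPn/negP => /HF; rewrite uE rS mulr1 => /eqP; by rewrite (negbTE anz).
have [j ji Hj] : exists2 j, j != i & j \in frac u.
  case: (pickP [pred j | (j != i) && (j \in frac u)]) => [j /andP[]|H]; first by exists j.
  exfalso.
  pose T := [set r | (r != i) && (u 0 r == a)].
  have uE r : u 0 r = u 0 i * (r == i)%:R + a * (r \in T)%:R.
    rewrite inE; case: (eqVneq r i) => [->|ri]; first by rewrite ?eqxx /= ?mulr1 ?mulr0 ?addr0.
    rewrite /= mulr0 add0r.
    case: eqP => [->|ne]; first by rewrite mulr1.
    rewrite mulr0; have := H r; rewrite /= ri /= inE.
    have := Hb r; case/andP => h1 h2.
    have h3 : u 0 r < a by rewrite lt_def h2 andbT eq_sym; apply/eqP.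
    rewrite h3 andbT => /negbT; rewrite -leNgt => h4; apply/eqP; rewrite eq_le h4 h1.
    done.
  have : \sum_r u 0 r = u 0 i + a * #|T|%:R.
    under eq_bigr do rewrite uE.
    by rewrite big_split /= sum_delta' -sum_ind mulr_sumr.
  rewrite Hs; move: Hi; rewrite inE => /andP[h1 h2].
  have [kT|Tk] := leqP k #|T|.
    have : (k%:R : R) <= #|T|%:R by rewrite ler_nat.
    move=> *; nra.
  have : (#|T|%:R : R) + 1 <= k%:R by rewrite natr1 ler_nat.
  move=> *; nra.
move: (Hi) (Hj); rewrite !inE => /andP[ui ui'] /andP[uj uj'].
have ij : i != j by rewrite eq_sym.
pose eps := Num.min (a - u 0 i) (u 0 j).
pose del := Num.min (u 0 i) (a - u 0 j).
have e0 : 0 < eps by rewrite lt_min; apply/andP; split; lra.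
have d0 : 0 < del by rewrite lt_min; apply/andP; split; lra.
have e1 : eps <= a - u 0 i by rewrite ge_min lexx.
have e2 : eps <= u 0 j by rewrite ge_min lexx orbT.
have d1 : del <= a - u 0 j by rewrite ge_min lexx orbT.
have d2 : del <= u 0 i by rewrite ge_min lexx.
have [Hp Sp] := move_hyp ij Hu ui uj ui' uj' (ltW e0) e1 e2.
have [Hm Sm] := move_hyp ji Hu uj ui uj' ui' (ltW d0) d1 d2.
set up := u + eps *: _ in Hp Sp.
set um := u + del *: _ in Hm Sm.
have Pp : frac up \proper frac u.
  apply/properP; split => //.
  have [h|h] := leP (a - u 0 i) (u 0 j).
    exists i => //; rewrite inE /up /evec !mxE !eqxx /= (negbTE ij) /= ?mulr0n ?subr0 ?sub0r ?mulr1 ?mulrN1.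
    rewrite /eps (min_l h); apply/negP => /andP[_]; lra.
  exists j => //; rewrite inE /up /evec !mxE !eqxx /= eq_sym (negbTE ij) /= ?mulr0n ?subr0 ?sub0r ?mulr1 ?mulrN1.
  rewrite /eps (min_r (ltW h)); apply/negP => /andP[]; lra.
have Pm : frac um \proper frac u.
  apply/properP; split => //.
  have [h|h] := leP (u 0 i) (a - u 0 j).
    exists i => //; rewrite inE /um /evec !mxE !eqxx /= (negbTE ij) /= ?mulr0n ?subr0 ?sub0r ?mulr1 ?mulrN1.
    rewrite /del (min_l h); apply/negP => /andP[]; lra.
  exists j => //; rewrite inE /um /evec !mxE !eqxx /= eq_sym (negbTE ij) /= ?mulr0n ?subr0 ?sub0r ?mulr1 ?mulrN1.
  rewrite /del (min_r (ltW h)); apply/negP => /andP[_]; lra.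
have Cp : (#|frac up| < c)%N by apply: leq_trans (proper_card Pp) _; rewrite -ltnS.
have Cm : (#|frac um| < c)%N by apply: leq_trans (proper_card Pm) _; rewrite -ltnS.
have ed : 0 < eps + del by lra.
have al0 : 0 <= del / (eps + del) by rewrite divr_ge0 // ltW.
have be0 : 0 <= eps / (eps + del) by rewrite divr_ge0 // ltW.
have := ncombD (ncombZ al0 (IH up Cp Hp)) (ncombZ be0 (IH um Cm Hm)).
have edn : eps + del != 0 by rewrite gt_eqF.
have -> : del / (eps + del) * a + eps / (eps + del) * a = a.
  by rewrite -mulrDl -mulrDl addrC divff // mul1r.
have -> : del / (eps + del) *: up + eps / (eps + del) *: um = u.
  apply/rowP => r; rewrite /up /um !mxE.
  set X := (_ %:R : R); set Y := (_ %:R : R).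
  field.
  done.
done.
Qed.

End Hyper.


Lemma ind3 (T : eqType) (a b c i : T) : a != b -> a != c -> b != c -> ((a == i) + (b == i) + (c == i) <= 1)%N.
Proof.
move=> ab ac bc.
have [<-|ai] := eqVneq a i.
  by rewrite ?eqxx ?(eq_sym b a) ?(negbTE ab) ?(eq_sym c a) ?(negbTE ac).
have [<-|bi] := eqVneq b i.
  by rewrite ?eqxx ?(negbTE ai) ?(eq_sym c b) ?(negbTE bc).
by rewrite ?(negbTE ai) ?(negbTE bi) /= leq_b1.
Qed.
Lemma ind4 (T : eqType) (a b c d i : T) : a != b -> a != c -> a != d -> b != c -> b != d -> c != d -> ((a == i) + (b == i) + (c == i) + (d == i) <= 1)%N.
Proof.
move=> ab ac ad bc bd cd.
have [<-|ai] := eqVneq a i.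
  by rewrite ?eqxx ?(eq_sym b a) ?(negbTE ab) ?(eq_sym c a) ?(negbTE ac) ?(eq_sym d a) ?(negbTE ad).
by rewrite ?(negbTE ai) add0n ind3.
Qed.
Lemma ind2 (T : eqType) (c i j : T) : i != j -> ((c == i) + (c == j) <= 1)%N.
Proof. by move=> ij; have [->|] := eqVneq c i; rewrite ?(negbTE ij) // add0n leq_b1. Qed.

Section Ineq.
Variable R : realFieldType.
Variable m : nat.
Local Notation N := (2 * m + 6)%N.
Local Notation k := m.+1.
Implicit Types (x : 'rV[R]_N).

Lemma indR (b : bool) : 0 <= (b%:R : R) <= 1.
Proof. by case: b; rewrite ?lexx ?ler01. Qed.

Lemma ind2R (c i j : 'I_N) : i != j -> (c == i)%:R + (c == j)%:R <= 1 :> R.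
Proof. by move=> ij; rewrite -natrD lern1 ind2. Qed.

Lemma ind3R (a b c i : 'I_N) : a != b -> a != c -> b != c ->
  (a == i)%:R + (b == i)%:R + (c == i)%:R <= 1 :> R.
Proof. by move=> *; rewrite -!natrD lern1 ind3. Qed.

Lemma ind4R (a b c d i : 'I_N) : a != b -> a != c -> a != d -> b != c -> b != d -> c != d ->
  (a == i)%:R + (b == i)%:R + (c == i)%:R + (d == i)%:R <= 1 :> R.
Proof. by move=> *; rewrite -!natrD lern1 ind4. Qed.

Lemma Nr : (N%:R : R) = 2 * k%:R + 4.
Proof. by rewrite natrD natrM -addn1 natrD; ring. Qed.

Lemma sum_ind1 (i : 'I_N) : \sum_r ((r == i)%:R : R) = 1.
Proof. by rewrite -[RHS](sum_delta' (fun _ => 1) i); apply: eq_bigr => r _; rewrite mul1r. Qed.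

Lemma sum_in_ind (B : {set 'I_N}) (i : 'I_N) : \sum_(r in B) ((r == i)%:R : R) = (i \in B)%:R.
Proof.
rewrite big_mkcond /= -[RHS](sum_delta' (fun r => (r \in B)%:R) i).
by apply: eq_bigr => r _; case: (r \in B); rewrite ?mul1r ?mul0r.
Qed.

Lemma wsum (i j : 'I_N) : \sum_r wij R i j 0 r = k%:R.
Proof.
under eq_bigr do rewrite wijE.
rewrite !sumrB !sum_ind1 sumr_const card_ord -[2^-1 *+ _]mulr_natr Nr; by field.
Qed.

Lemma vsum (S : {set 'I_N}) : \sum_r vS R S 0 r = #|S|%:R.
Proof. by under eq_bigr do rewrite vSE; rewrite sum_ind. Qed.

Lemma Pm_ge x (phi : 'rV[R]_N -> R) b :
  (forall a y z, phi (a *: y + z) = a * phi y + phi z) -> @P_m R m x ->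
  (forall S : {set 'I_N}, #|S| = k -> b <= phi (vS R S)) ->
  (forall i j : 'I_N, i != j -> b <= phi (wij R i j)) -> b <= phi x.
Proof.
move=> lin Hx HS Hw; apply: (conv_ge lin Hx) => p [[S [cS ->]]|[i [j [ij ->]]]].
  exact: HS.
by apply: Hw; apply/eqP => e; move: ij; rewrite e ltnn.
Qed.

End Ineq.


Section Ineq2.
Variable R : realFieldType.
Variable m : nat.
Local Notation N := (2 * m + 6)%N.
Local Notation k := m.+1.
Variable x : 'rV[R]_N.
Hypothesis Hx : @P_m R m x.

Lemma V1 : \sum_r x 0 r = k%:R.
Proof.
have lin : forall a (y z : 'rV[R]_N), \sum_r (a *: y + z) 0 r = a * \sum_r y 0 r + \sum_r z 0 r.
  by move=> a y z; under eq_bigr do rewrite !mxE; rewrite big_split /= -mulr_sumr.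
have lin' : forall a (y z : 'rV[R]_N), - \sum_r (a *: y + z) 0 r = a * - \sum_r y 0 r + - \sum_r z 0 r.
  by move=> a y z; rewrite lin; ring.
have g1 : k%:R <= \sum_r x 0 r.
  apply: (@Pm_ge R m x (fun y => \sum_r y 0 r) _ lin Hx) => [S cS|i j ij]; by rewrite ?vsum ?wsum ?cS.
have g2 : - k%:R <= - \sum_r x 0 r.
  apply: (@Pm_ge R m x (fun y => - \sum_r y 0 r) _ lin' Hx) => [S cS|i j ij]; by rewrite ?vsum ?wsum ?cS.
lra.
Qed.

Lemma i0 (b : bool) : 0 <= (b%:R : R). Proof. by case: b; rewrite ?ler01. Qed.
Lemma i1 (b : bool) : (b%:R : R) <= 1. Proof. by case: b; rewrite ?ler01. Qed.

Lemma V2 r c : x 0 r - x 0 c <= 1.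
Proof.
suff : -1 <= x 0 c - x 0 r by lra.
apply: (@Pm_ge R m x (fun y => y 0 c - y 0 r) _ _ Hx) => [a y z|S cS|i j ij]; rewrite /= ?vSE ?wijE ?mxE.
- ring.
- have := i0 (c \in S); have := i1 (r \in S); lra.
- have := ind2R R c ij; have := i0 (r == i); have := i0 (r == j); lra.
Qed.

Lemma V7 c : - 2^-1 <= x 0 c.
Proof.
apply: (@Pm_ge R m x (fun y => y 0 c) _ _ Hx) => [a y z|S cS|i j ij]; rewrite /= ?vSE ?wijE ?mxE.
- ring.
- have := i0 (c \in S); lra.
- have := ind2R R c ij; lra.
Qed.

Lemma V8 c : x 0 c <= 1.
Proof.
suff : -1 <= - x 0 c by lra.
apply: (@Pm_ge R m x (fun y => - y 0 c) _ _ Hx) => [a y z|S cS|i j ij]; rewrite /= ?vSE ?wijE ?mxE.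
- ring.
- have := i1 (c \in S); lra.
- have := i0 (c == i); have := i0 (c == j); lra.
Qed.

Lemma V4 a b c : a != b -> a != c -> b != c -> - 2^-1 <= x 0 a + x 0 b + x 0 c.
Proof.
move=> ab ac bc.
apply: (@Pm_ge R m x (fun y => y 0 a + y 0 b + y 0 c) _ _ Hx) => [t y z|S cS|i j ij]; rewrite /= ?vSE ?wijE ?mxE.
- ring.
- have := i0 (a \in S); have := i0 (b \in S); have := i0 (c \in S); lra.
- have := ind3R R i ab ac bc; have := ind3R R j ab ac bc; lra.
Qed.

Lemma V5 r a b c : r != a -> r != b -> r != c -> a != b -> a != c -> b != c ->
  0 <= x 0 r + x 0 a + x 0 b + x 0 c.
Proof.
move=> ra rb rc ab ac bc.
apply: (@Pm_ge R m x (fun y => y 0 r + y 0 a + y 0 b + y 0 c) _ _ Hx) => [t y z|S cS|i j ij]; rewrite /= ?vSE ?wijE ?mxE.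
- ring.
- have := i0 (a \in S); have := i0 (b \in S); have := i0 (c \in S); have := i0 (r \in S); lra.
- have := ind4R R i ra rb rc ab ac bc; have := ind4R R j ra rb rc ab ac bc; lra.
Qed.

Lemma V6 r a b c : a != b -> a != c -> b != c ->
  x 0 r - (x 0 a + x 0 b + x 0 c) <= 1.
Proof.
move=> ab ac bc.
suff : -1 <= x 0 a + x 0 b + x 0 c - x 0 r by lra.
apply: (@Pm_ge R m x (fun y => y 0 a + y 0 b + y 0 c - y 0 r) _ _ Hx) => [t y z|S cS|i j ij]; rewrite /= ?vSE ?wijE ?mxE.
- ring.
- have := i0 (a \in S); have := i0 (b \in S); have := i0 (c \in S); have := i1 (r \in S); lra.
- have := ind3R R i ab ac bc; have := ind3R R j ab ac bc; have := i0 (r == i); have := i0 (r == j); lra.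
Qed.

Lemma V3 (B : {set 'I_N}) c : c \notin B -> (3 <= #|B|)%N ->
  0 <= \sum_(r in B) x 0 r + (#|B|%:R - 2) * x 0 c.
Proof.
move=> cB B3.
have B3' : (3 : R) <= #|B|%:R by rewrite (ler_nat R 3).
apply: (@Pm_ge R m x (fun y => \sum_(r in B) y 0 r + (#|B|%:R - 2) * y 0 c) _ _ Hx) => [t y z|S cS|i j ij].
- by under eq_bigr do rewrite !mxE; rewrite big_split /= -mulr_sumr !mxE; ring.
- under eq_bigr do rewrite vSE; rewrite vSE.
  have := i0 (c \in S); have : 0 <= \sum_(i in B) ((i \in S)%:R : R) by apply: sumr_ge0 => *; apply: i0.
  nra.
- under eq_bigr do rewrite wijE; rewrite !sumrB sumr_const !sum_in_ind wijE.
  rewrite -[2^-1 *+ _]mulr_natr.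
  have [ci|ci] := eqVneq c i.
    rewrite -ci (negbTE cB) (negbTE (_ : c != j)) /= ?mulr0n ?mulr1n; last by rewrite ci.
    have := i0 (j \in B); have := i1 (j \in B); lra.
  have [cj|cj] := eqVneq c j.
    rewrite -cj (negbTE cB) ?(negbTE ci) /= ?mulr0n ?mulr1n.
    have := i0 (i \in B); have := i1 (i \in B); lra.
  rewrite ?(negbTE ci) ?(negbTE cj).
  rewrite /= ?mulr0n; have := i1 (i \in B); have := i1 (j \in B); lra.
Qed.

End Ineq2.


Section Pieces.
Variable R : realFieldType.
Variable m : nat.
Local Notation N := (2 * m + 6)%N.
Local Notation k := m.+1.
Implicit Types (x : 'rV[R]_N).

Lemma I_piece x : (forall r, 0 <= x 0 r <= 1) -> \sum_r x 0 r = k%:R -> @P_I R m x.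
Proof.
move=> Hb Hs.
have := @hyper R N k predT 1 x ler01.
case.
  by split => // ; rewrite Hs mulr1.
move=> kk [p [l [Ap Hl]]]; exists kk, p, l; split => // i.
by have [S [cS [_ ->]]] := Ap i; exists S.
Qed.

Lemma sum_neq (c : 'I_N) (f : 'I_N -> R) : \sum_r f r = f c + \sum_(r | r != c) f r.
Proof. exact: bigD1. Qed.

Lemma sum_neq_cst (c : 'I_N) (a : R) : \sum_(r | r != c) a = (N%:R - 1) * a.
Proof.
have := sum_neq c (fun _ => a); rewrite sumr_const card_ord => h.
rewrite mulrBl mul1r mulrC mulr_natr h; ring.
Qed.

Definition genII' (c : 'I_N) (p : 'rV[R]_N) :=
  (exists S : {set 'I_N}, #|S| = k /\ (forall r, r \in S -> r != c) /\ p = vS R S) \/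
  (exists j, j != c /\ p = wij R c j).

Lemma II_piece x c :
  - 2^-1 <= x 0 c -> (forall r, x 0 r - x 0 c <= 1) -> \sum_r x 0 r = k%:R ->
  2 * x 0 c <= \sum_(r in [set r | (r != c) && (x 0 r + x 0 c < 0)]) (x 0 r + x 0 c) ->
  conv_hull (genII' c) x.
Proof.
move=> hc H2 H1 HA.
set A := [set r | _] in HA.
pose t := - (2 * x 0 c).
pose yp r := if r \in A then 0 else x 0 r + x 0 c.
pose Sp := \sum_(r | r != c) yp r.
pose num := k%:R * (1 - t) - Sp.
pose den := (N%:R - 1) * (1 - t) - Sp.
pose th := num / den.
have Nr' := Nr R m.
have t1 : 0 <= 1 - t by rewrite /t; lra.
have F1 : \sum_(r | r != c) x 0 r = k%:R - x 0 c.
  by move: H1; rewrite (sum_neq c (fun r => x 0 r)) => <-; ring.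
have F2 : \sum_(r | r != c) (x 0 r + x 0 c) = k%:R + (N%:R - 2) * x 0 c.
  by rewrite big_split /= F1 sum_neq_cst; ring.
have F3 : \sum_(r | r != c) (x 0 r + x 0 c) = Sp + \sum_(r in A) (x 0 r + x 0 c).
  have -> : \sum_(r in A) (x 0 r + x 0 c) = \sum_(r | r != c) (if r \in A then x 0 r + x 0 c else 0).
    by rewrite -big_mkcondr; apply: eq_bigl => r; rewrite inE; case: (r != c).
  rewrite /Sp -big_split /=; apply: eq_bigr => r _; rewrite /yp; case: (r \in A); ring.
have SpE : Sp = k%:R + (N%:R - 2) * x 0 c - \sum_(r in A) (x 0 r + x 0 c) by rewrite -F2 F3; ring.
have numE : num = \sum_(r in A) (x 0 r + x 0 c) - 2 * x 0 c by rewrite /num SpE /t Nr'; ring.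
have num0 : 0 <= num by rewrite numE; lra.
have dn : den - num = (N%:R - 1 - k%:R) * (1 - t) by rewrite /den /num; ring.
have Nk : 0 <= N%:R - 1 - k%:R :> R by rewrite Nr'; have := ler0n R k; lra.
have numden : num <= den by have := mulr_ge0 Nk t1; lra.
have [th0 th1 thd] : [/\ 0 <= th, th <= 1 & th * den = num].
  case: (eqVneq den 0) => [d0|d0].
    have n0 : num = 0 by lra.
    by rewrite /th d0 n0 invr0 !mulr0 lexx ler01.
  have dpos : 0 < den by rewrite lt_def d0; lra.
  split; [exact: divr_ge0 num0 (ltW dpos) | by rewrite ler_pdivrMr // mul1r | by rewrite /th mulfVK].
have yp_bd r : r != c -> [/\ 0 <= yp r, yp r <= 1 - t & x 0 r + x 0 c <= yp r].
  move=> rc; rewrite /yp /A inE rc /=; case: ltP => h; first by split => //; lra.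
  by have := H2 r; split => //; rewrite /t; lra.
pose u := \row_r (if r == c then 0 else yp r + th * (1 - t - yp r)) : 'rV[R]_N.
have Hu : @hyp R N k (fun r => r != c) (1 - t) u.
  split.
  - move=> r; rewrite mxE; case: eqP => [_|/eqP rc]; first by rewrite lexx t1.
    have [y0 y1 _] := yp_bd r rc; apply/andP; split; nra.
  - by move=> r /negPn/eqP ->; rewrite mxE eqxx.
  - rewrite (sum_neq c (fun r => u 0 r)) mxE eqxx add0r.
    have -> : \sum_(r | r != c) u 0 r = \sum_(r | r != c) (yp r + th * (1 - t - yp r)).
      by apply: eq_bigr => r /negbTE rc; rewrite mxE rc.
    rewrite big_split /= -mulr_sumr sumrB sum_neq_cst -/Sp.
    have := thd; rewrite /den => ->; rewrite /num; ring.
have HU := @hyper R N k (fun r => r != c) (1 - t) u t1 Hu.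
pose d r := if r == c then 0 else u 0 r - (x 0 r + x 0 c).
have d0 r : r != c -> 0 <= d r.
  move=> rc; rewrite /d (negbTE rc) mxE (negbTE rc).
  have [y0 y1 y2] := yp_bd r rc; nra.
have Sd : \sum_(r | r != c) d r = t.
  have -> : \sum_(r | r != c) d r = \sum_(r | r != c) (u 0 r - (x 0 r + x 0 c)).
    by apply: eq_bigr => r /negbTE rc; rewrite /d rc.
  case: Hu => _ _; rewrite (sum_neq c (fun r => u 0 r)) mxE eqxx add0r => Hs.
  by rewrite sumrB F2 Hs /t Nr'; ring.
have HW := @ncomb_sum R N (genII' c) 'I_N (fun r => r != c) d (wij R c).
have {}HW := HW (fun r rc => or_intror (ex_intro _ r (conj rc erefl))) d0.
have := ncombD (ncomb_mono (B := genII' c) _ HU) HW.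
have -> : 1 - t + \sum_(i | i != c) d i = 1 by rewrite Sd subrK.
have -> : u + \sum_(r | r != c) d r *: wij R c r = x.
  apply/rowP => q; rewrite mxE summxE.
  under eq_bigr do rewrite mxE wijE mulrBr.
  rewrite sumrB -mulr_suml Sd.
  have -> : \sum_(r | r != c) d r * (q == r)%:R = d q.
    by rewrite -(sum_delta d q) (sum_neq c (fun r => d r * (q == r)%:R)) /d eqxx mul0r add0r.
  rewrite /d mxE; case: eqVneq => [->|qc]; rewrite /t /=; lra.
apply.
by move=> p [S [cS [HS ->]]]; left; exists S; split => //; split => // r /HS.
Qed.

Lemma addE (A B : 'rV[R]_N) q : (A + B) 0 q = A 0 q + B 0 q. Proof. by rewrite mxE. Qed.
Lemma scalE (c : R) (A : 'rV[R]_N) q : (c *: A) 0 q = c * A 0 q. Proof. by rewrite mxE. Qed.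

Definition genIII' (a b c : 'I_N) (p : 'rV[R]_N) :=
  (exists S : {set 'I_N}, #|S| = k /\ (forall r, r \in S -> [&& r != a, r != b & r != c]) /\ p = vS R S) \/
  p = wij R a b \/ p = wij R a c \/ p = wij R b c.

Lemma III_piece x a b c : a != b -> a != c -> b != c ->
  x 0 a + x 0 b <= 0 -> x 0 a + x 0 c <= 0 -> x 0 b + x 0 c <= 0 ->
  - 2^-1 <= x 0 a + x 0 b + x 0 c ->
  (forall r, [&& r != a, r != b & r != c] -> 0 <= x 0 r + (x 0 a + x 0 b + x 0 c)) ->
  (forall r, x 0 r - (x 0 a + x 0 b + x 0 c) <= 1) ->
  \sum_r x 0 r = k%:R -> conv_hull (genIII' a b c) x.
Proof.
move=> ab ac bc hab hac hbc h4 h5 h6 H1.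
pose s := x 0 a + x 0 b + x 0 c.
have Nr' := Nr R m.
pose u := \row_r ((x 0 r + s) * (1 - (r == a)%:R - (r == b)%:R - (r == c)%:R)) : 'rV[R]_N.
have t1 : 0 <= 1 + 2 * s by rewrite /s; lra.
have uE r : u 0 r = if [&& r != a, r != b & r != c] then x 0 r + s else 0.
  rewrite mxE; case: (eqVneq r a) => [->|ra].
    by rewrite ?(negbTE ab) ?(negbTE ac) /= ?mulr0n ?mulr1n; ring.
  case: (eqVneq r b) => [->|rb].
    by rewrite ?eqxx ?(eq_sym b a) ?(negbTE ab) ?(negbTE bc) /= ?mulr0n ?mulr1n; ring.
  case: (eqVneq r c) => [->|rc].
    by rewrite ?eqxx ?(eq_sym c a) ?(eq_sym c b) ?(negbTE ac) ?(negbTE bc) /= ?mulr0n ?mulr1n; ring.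
  by rewrite /= ?mulr0n; ring.
have Hu : @hyp R N k (fun r => [&& r != a, r != b & r != c]) (1 + 2 * s) u.
  split.
  - move=> r; rewrite uE; case: ifP => [h|_]; last by rewrite lexx t1.
    have := h5 r h; have := h6 r; rewrite /s => *; apply/andP; split; lra.
  - by move=> r /negbTE h; rewrite uE h.
  - under eq_bigr do rewrite mxE !mulrBr mulr1.
    rewrite !sumrB !sum_delta' big_split /= H1 sumr_const card_ord -[s *+ _]mulr_natr Nr' /s.
    ring.
have HU := @hyper R N k _ (1 + 2 * s) u t1 Hu.
have g1 : genIII' a b c (wij R a b) by right; left.
have g2 : genIII' a b c (wij R a c) by right; right; left.
have g3 : genIII' a b c (wij R b c) by right; right; right.
have al : 0 <= - (x 0 a + x 0 b) by lra.
have be : 0 <= - (x 0 a + x 0 c) by lra.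
have ga : 0 <= - (x 0 b + x 0 c) by lra.
have := ncombD (ncombD (ncombD (ncomb_mono (B := genIII' a b c) _ HU) (ncomb1 g1 al)) (ncomb1 g2 be)) (ncomb1 g3 ga).
have -> : 1 + 2 * s + - (x 0 a + x 0 b) + - (x 0 a + x 0 c) + - (x 0 b + x 0 c) = 1 by rewrite /s; ring.
have -> : u + - (x 0 a + x 0 b) *: wij R a b + - (x 0 a + x 0 c) *: wij R a c + - (x 0 b + x 0 c) *: wij R b c = x.
  apply/rowP => q; rewrite !addE !scalE !wijE uE /s.
  case: (eqVneq q a) => [->|qa].
    by rewrite ?(negbTE ab) ?(negbTE ac) ?eqxx /= ?mulr0n ?mulr1n; lra.
  case: (eqVneq q b) => [->|qb].
    by rewrite ?eqxx ?(eq_sym b a) ?(negbTE ab) ?(negbTE bc) /= ?mulr0n ?mulr1n; lra.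
  case: (eqVneq q c) => [->|qc].
    by rewrite ?eqxx ?(eq_sym c a) ?(eq_sym c b) ?(negbTE ac) ?(negbTE bc) /= ?mulr0n ?mulr1n; lra.
  by rewrite /= ?mulr0n; lra.
apply.
by move=> p [S [cS [HS ->]]]; left; exists S; split => //; split => // r /HS.
Qed.

End Pieces.


Section Perm.
Variable R : realFieldType.
Variable n : nat.
Implicit Types (s : 'S_n) (y : 'rV[R]_n).

Lemma permvE s y q : permv s y 0 q = y 0 ((s^-1)%g q).
Proof. by rewrite mxE. Qed.

Lemma permvK s y : permv s (permv (s^-1)%g y) = y.
Proof. by apply/rowP => q; rewrite !permvE invgK permKV. Qed.

Lemma permv_vS s (S : {set 'I_n}) : permv s (vS R S) = vS R (s @: S).
Proof.
apply/rowP => q; rewrite permvE !vSE.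
by rewrite -{2}(permKV s q) mem_imset //; exact: perm_inj.
Qed.

Lemma permv_w s (i j : 'I_n) : permv s (wij R i j) = wij R (s i) (s j).
Proof.
apply/rowP => q; rewrite permvE !wijE.
have h z : ((s^-1)%g q == z) = (q == s z) by rewrite -(inj_eq (@perm_inj _ s)) permKV.
by rewrite !h.
Qed.

Lemma wijC (i j : 'I_n) : wij R i j = wij R j i.
Proof. by apply/rowP => q; rewrite !wijE; ring. Qed.

Lemma conv_permv (A B : 'rV[R]_n -> Prop) s y :
  conv_hull A y -> (forall p, A p -> B (permv s p)) -> conv_hull B (permv s y).
Proof.
move=> [kk [p [l [Ap [l0 [l1 ->]]]]]] HB.
exists kk, (fun i => permv s (p i)), l; split; first by move=> i; apply: HB.
split => //; split => //.
apply/rowP => q; rewrite permvE !summxE; apply: eq_bigr => i _.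
by rewrite !mxE.
Qed.

Lemma conv_perm (A B : 'rV[R]_n -> Prop) s y :
  conv_hull A y -> (forall p, A p -> B (permv (s^-1)%g p)) -> perm_img s (conv_hull B) y.
Proof.
move=> Hy HB; exists (permv (s^-1)%g y); first exact: conv_permv Hy HB.
by rewrite permvK.
Qed.

End Perm.


Section Final.
Variable R : realFieldType.
Variable m : nat.
Local Notation N := (2 * m + 6)%N.
Local Notation k := m.+1.

Definition o0 : 'I_N := @Ordinal N 0 (ltn_addl _ (isT : (0 < 6)%N)).
Definition o1 : 'I_N := @Ordinal N 1 (ltn_addl _ (isT : (1 < 6)%N)).
Definition o2 : 'I_N := @Ordinal N 2 (ltn_addl _ (isT : (2 < 6)%N)).

Lemma ge3 (z : 'I_N) : z != o0 -> z != o1 -> z != o2 -> (3 <= z)%N.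
Proof. by rewrite -!val_eqE /=; case: (nat_of_ord z) => [|[|[|]]]. Qed.

Lemma ge1 (z : 'I_N) : z != o0 -> (1 <= z)%N.
Proof. by rewrite -!val_eqE /=; case: (nat_of_ord z). Qed.

Lemma II_perm (x : 'rV[R]_N) c : conv_hull (@genII' R m c) x ->
  exists s : 'S_N, perm_img s (@P_II R m) x.
Proof.
move=> H; exists (tperm o0 c); apply: (conv_perm H) => p [[S [cS [HS ->]]]|[j [jc ->]]]; rewrite tpermV.
- rewrite permv_vS; left; exists (tperm o0 c @: S); split.
    by rewrite card_imset //; exact: perm_inj.
  split => // r /imsetP [r' r'S ->]; apply: ge1; apply/eqP => h.
  have := HS r' r'S; move/(congr1 (tperm o0 c)): h; rewrite tpermK tpermL => ->.
  by rewrite eqxx.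
- rewrite permv_w tpermR; right; exists o0, (tperm o0 c j); split => //; split => //.
  apply: ge1; apply/eqP => h; move/(congr1 (tperm o0 c)): h; rewrite tpermK tpermL => h.
  by move: jc; rewrite h eqxx.
Qed.

Lemma perm3 (a b c : 'I_N) : a != b -> a != c -> b != c ->
  exists s : 'S_N, [/\ s o0 = a, s o1 = b & s o2 = c].
Proof.
move=> ab ac bc.
have o01 : o1 != o0 by rewrite -val_eqE.
have o02 : o2 != o0 by rewrite -val_eqE.
have o12 : o2 != o1 by rewrite -val_eqE.
pose t1 := tperm o0 a.
pose b' := t1 b.
have b'0 : b' != o0.
  apply/eqP => h; have := congr1 t1 h; rewrite /b' tpermK /t1 tpermL => ha.
  by move: ab; rewrite ha eqxx.
pose t2 := tperm o1 b'.
pose s12 := (t2 * t1)%g.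
have s12_0 : s12 o0 = a by rewrite permM /t2 tpermD // /t1 tpermL.
have s12_1 : s12 o1 = b by rewrite permM /t2 tpermL /b' tpermK.
pose c' := (s12^-1)%g c.
have s12c : s12 c' = c by rewrite /c' permKV.
have c'0 : c' != o0.
  by apply/eqP => h; move: s12c; rewrite h s12_0 => ca; move: ac; rewrite ca eqxx.
have c'1 : c' != o1.
  by apply/eqP => h; move: s12c; rewrite h s12_1 => cb; move: bc; rewrite cb eqxx.
pose t3 := tperm o2 c'.
exists (t3 * s12)%g; split.
- by rewrite permM /t3 tpermD.
- by rewrite permM /t3 tpermD.
- by rewrite permM /t3 tpermL.
Qed.

Lemma III_perm (x : 'rV[R]_N) a b c : a != b -> a != c -> b != c ->
  conv_hull (@genIII' R m a b c) x -> exists s : 'S_N, perm_img s (@P_III R m) x.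
Proof.
move=> ab ac bc H.
have [s [sa sb sc]] := perm3 ab ac bc.
have ia : (s^-1)%g a = o0 by rewrite -sa permK.
have ib : (s^-1)%g b = o1 by rewrite -sb permK.
have ic : (s^-1)%g c = o2 by rewrite -sc permK.
exists s; apply: (conv_perm H) => p [[S [cS [HS ->]]]|[->|[->|->]]].
- rewrite permv_vS; left; exists ((s^-1)%g @: S); split.
    by rewrite card_imset //; exact: perm_inj.
  split => // r /imsetP [r' r'S ->].
  have := HS r' r'S; case/and3P => ra rb rc.
  apply: ge3; apply/eqP => h; move/(congr1 s): h; rewrite permKV => h.
  + by move: ra; rewrite h sa eqxx.
  + by move: rb; rewrite h sb eqxx.
  + by move: rc; rewrite h sc eqxx.
- by rewrite permv_w ia ib; right; exists o0, o1.
- by rewrite permv_w ia ic; right; exists o0, o2.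
- by rewrite permv_w ib ic; right; exists o1, o2.
Qed.

End Final.


Lemma gP_w (R : realFieldType) m (i j : 'I_(2 * m + 6)) : i != j -> @gen_P R m (wij R i j).
Proof.
move=> ij; right; case: (ltngtP i j) => h.
- by exists i, j.
- by exists j, i; rewrite wijC.
- by move: ij; rewrite (val_inj h) eqxx.
Qed.

Unset Implicit Arguments.
Theorem proposition5p6 (R : realFieldType) (m : nat) (x : 'rV[R]_(2 * m + 6)) :
  @P_m R m x <->
  (@P_I R m x \/
   (exists s : 'S_(2 * m + 6), perm_img s (@P_II R m) x) \/
   (exists s : 'S_(2 * m + 6), perm_img s (@P_III R m) x)).
Proof.
split.
- move=> Hx.
  have H1 := V1 Hx.
  have [c Hc] : exists c : 'I_(2 * m + 6), forall r, x 0 c <= x 0 r.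
    have := @arg_minP _ _ _ (o0 m) predT (fun r => x 0 r) isT.
    by case => c _ Hc; exists c => r; apply: Hc.
  case: (lerP 0 (x 0 c)) => [c0|c0].
    left; apply: I_piece => // r; apply/andP; split; [exact: le_trans c0 (Hc r) | exact: V8 Hx r].
  right.
  set A := [set r | (r != c) && (x 0 r + x 0 c < 0)].
  have HII : 2 * x 0 c <= \sum_(r in A) (x 0 r + x 0 c) -> exists s, perm_img s (@P_II R m) x.
    move=> HA; apply: (II_perm (II_piece _ _ H1 HA)); [exact: V7 | move=> r; exact: V2].
  have Ac r : r \in A -> (r != c) /\ (x 0 r + x 0 c < 0) by rewrite inE => /andP.
  have [/cards2P [a [b [ab AE]]]|A2] := boolP (#|A| == 2%N).
    have [ac hac] : (a != c) /\ (x 0 a + x 0 c < 0) by apply: Ac; rewrite AE !inE eqxx.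
    have [bc hbc] : (b != c) /\ (x 0 b + x 0 c < 0) by apply: Ac; rewrite AE !inE eqxx orbT.
    case: (lerP 0 (x 0 a + x 0 b)) => hab.
      left; apply: HII; rewrite AE big_setU1 ?big_set1 /=; first by lra.
      by rewrite inE.
    right; apply: (III_perm ab ac bc); apply: III_piece => //.
    + exact: ltW.
    + exact: ltW.
    + exact: ltW.
    + have := V4 Hx ab ac bc; lra.
    + by move=> r /and3P [ra rb rc]; have := V5 Hx ra rb rc ab ac bc; lra.
    + by move=> r; have := V6 Hx r ab ac bc; lra.
  left; apply: HII.
  rewrite big_split /= sumr_const -mulr_natr.
  have [A3|A1] := leqP 3 #|A|.
    have := V3 Hx (B := A) (c := c) _ A3.
    have -> : (c \in A) = false by rewrite inE eqxx.
    move=> /(_ isT) h; nra.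
  have hs : \sum_(r in A) x 0 c <= \sum_(r in A) x 0 r by apply: ler_sum => r _; exact: Hc.
  rewrite sumr_const -mulr_natr in hs.
  have : (#|A| = 0 \/ #|A| = 1)%N by lia.
  case => h; rewrite h ?mulr0n ?mulr1n in hs *; lra.
- case => [HI | [[s [y Hy ->]] | [s [y Hy ->]]]].
  + case: HI => kk [p [l [Ap H]]]; exists kk, p, l; split => // i; left; exact: Ap i.
  + apply: (conv_permv Hy) => p [[S [cS [_ ->]]]|[i [j [i0 [j1 ->]]]]].
      left; exists (s @: S); rewrite permv_vS card_imset //; exact: perm_inj.
    rewrite permv_w; apply: gP_w; rewrite (inj_eq (@perm_inj _ s)).
    by apply/eqP => h; move: j1; rewrite -h i0.
  + apply: (conv_permv Hy) => p [[S [cS [_ ->]]]|[i [j [ij [j2 ->]]]]].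
      left; exists (s @: S); rewrite permv_vS card_imset //; exact: perm_inj.
    rewrite permv_w; apply: gP_w; rewrite (inj_eq (@perm_inj _ s)).
    by apply/eqP => h; move: ij; rewrite h ltnn.
Qed.
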